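(* Let $\varepsilon=1+\sqrt2$, $K=\mathbb Q(\sqrt2)$ with nontrivial automorphism $\sigma$, $N(z)=z\sigma(z)$, $$\Gamma=\Gamma(2,5)=\left\{\gamma=\begin{pmatrix}x_0+x_1\sqrt2&\sqrt5(x_2+x_3\sqrt2)\\ \sqrt5(x_2-x_3\sqrt2)&x_0-x_1\sqrt2\end{pmatrix}\in\mathrm{SL}_2(\mathbb R):\ x_i\in\mathbb Z\right\},$$ $h_0=\begin{pmatrix}\varepsilon^2&0\\0&\varepsilon^{-2}\end{pmatrix}$, and $z_1(\gamma)=x_0+x_1\sqrt2$, $z_2(\gamma)=x_2+x_3\sqrt2$. Then: (1) $\gamma\mapsto(z_1(\gamma),z_2(\gamma))$ is injective; (2) if $\gamma\in\Gamma\setminus S$, then $N(z_1(\gamma))$ and $N(z_2(\gamma))$ are non-zero and have the same sign; writing $N(z_1(\gamma))=5N(z_2(\gamma))+1=5n+1$: (a) if $\delta_1(\gamma)+\delta_2(\gamma)$ is even then $n\in\mathbb N$ and $\delta(\gamma)=20n+2$; (b) if $\delta_1(\gamma)+\delta_2(\gamma)$ is odd then $n\in-\mathbb N$ and $\delta(\gamma)=-20n-2$; (3) if $\gamma'=h_0^{j_1}\gamma h_0^{j_2}$ then $z_1(\gamma')=\varepsilon^{2(j_1+j_2)}z_1(\gamma)$ and $z_2(\gamma')=\varepsilon^{2(j_1-j_2)}z_2(\gamma)$; (4) for $\gamma\in\Gamma\setminus S$, $e\!\left(\frac{\log y_1(\gamma)}{\log\varepsilon^4}\right)=\lambda(z_1(\gamma))\lambda(z_2(\gamma))$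 and $e\!\left(\frac{\log y_2(\gamma)}{\log\varepsilon^4}\right)=\lambda(z_1(\gamma))/\lambda(z_2(\gamma))$.
   Context: For $g=\begin{pmatrix}a&b\\c&d\end{pmatrix}\in\mathrm{SL}_2(\mathbb R)$: $s=\{abcd=0\}$, $S=s\cup\{g: g(iy_1)=iy_2\text{ for some }y_1,y_2>0\}$; $\delta(g)=2|ad+bc|$. For $g\notin S$: $y_1(g)=|ab/(cd)|^{1/2}$, $y_2(g)=|ac/(bd)|^{1/2}$, and $(\delta_1(g),\delta_2(g))\in\{0,1\}^2$ is $(0,0),(1,1),(1,0),(0,1)$ according as the sign pattern of $(a,b,c,d)$ is $\pm(+,+,+,+)$, $\pm(+,-,-,+)$, $\pm(+,+,-,-)$, $\pm(+,-,+,-)$. $e(t)=e^{2\pi it}$, and for $z\in K$ with $z\sigma(z)\ne0$, $\lambda(z)=\left|\frac{z}{\sigma z}\right|^{\frac{\pi i}{4\log\varepsilon}}=\exp\!\left(\frac{\pi i}{4\log\varepsilon}\log\left|\frac{z}{\sigma z}\right|\right)$. *)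

(* Defs.v *)
From Stdlib Require Import Reals ZArith QArith Qreals ClassicalEpsilon.
From Coquelicot Require Import Coquelicot.
Open Scope R_scope.

Definition eps : R := 1 + sqrt 2.

Definition inK (z : R) : Prop :=
  exists pq : Q * Q, z = Q2R (fst pq) + Q2R (snd pq) * sqrt 2.

(* the nontrivial automorphism sigma of K (value 0 outside K, never used there) *)
Definition sigma (z : R) : R :=
  match excluded_middle_informative (inK z) with
  | left H =>
      let pq := proj1_sig (constructive_indefinite_description _ H) in
      Q2R (fst pq) - Q2R (snd pq) * sqrt 2
  | right _ => 0
  end.

Definition Nm (z : R) : R := z * sigma z.

Record mat := Mat { ma : R; mb : R; mc : R; md : R }.

Definition det (g : mat) : R := ma g * md g - mb g * mc g.
Definition mmul (g h : mat) : mat :=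
  Mat (ma g * ma h + mb g * mc h) (ma g * mb h + mb g * md h)
      (mc g * ma h + md g * mc h) (mc g * mb h + md g * md h).
Definition mid : mat := Mat 1 0 0 1.
(* inverse of a determinant-one matrix *)
Definition minv (g : mat) : mat := Mat (md g) (- mb g) (- mc g) (ma g).
Fixpoint mpow (g : mat) (n : nat) : mat :=
  match n with O => mid | S k => mmul g (mpow g k) end.
Definition mpowZ (g : mat) (j : Z) : mat :=
  match j with
  | Z0 => mid
  | Zpos p => mpow g (Pos.to_nat p)
  | Zneg p => mpow (minv g) (Pos.to_nat p)
  end.

Definition h0 : mat := Mat (eps ^ 2) 0 0 (/ eps ^ 2).

Definition inGamma (g : mat) : Prop :=
  det g = 1 /\
  exists x0 x1 x2 x3 : Z,
    ma g = IZR x0 + IZR x1 * sqrt 2 /\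
    mb g = sqrt 5 * (IZR x2 + IZR x3 * sqrt 2) /\
    mc g = sqrt 5 * (IZR x2 - IZR x3 * sqrt 2) /\
    md g = IZR x0 - IZR x1 * sqrt 2.

Definition z1 (g : mat) : R := ma g.
Definition z2 (g : mat) : R := mb g / sqrt 5.

Definition mobius (g : mat) (z : C) : C :=
  Cdiv (Cplus (Cmult (RtoC (ma g)) z) (RtoC (mb g)))
       (Cplus (Cmult (RtoC (mc g)) z) (RtoC (md g))).

Definition in_s (g : mat) : Prop := ma g * mb g * mc g * md g = 0.
Definition in_S (g : mat) : Prop :=
  in_s g \/
  exists y1 y2 : R, 0 < y1 /\ 0 < y2 /\ mobius g (0, y1) = (0, y2).

Definition delta (g : mat) : R := 2 * Rabs (ma g * md g + mb g * mc g).

Definition y1 (g : mat) : R :=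
  sqrt (Rabs (ma g * mb g / (mc g * md g))).
Definition y2 (g : mat) : R :=
  sqrt (Rabs (ma g * mc g / (mb g * md g))).

Definition posb (x : R) : bool := if Rlt_dec 0 x then true else false.

(* (delta1, delta2) from the sign pattern of (a,b,c,d); patterns not listed
   (which do not occur for g in SL2 \ S) get the default (0,0). *)
Definition delta12 (g : mat) : Z * Z :=
  match posb (ma g), posb (mb g), posb (mc g), posb (md g) with
  | true, true, true, true | false, false, false, false => (0, 0)%Z
  | true, false, false, true | false, true, true, false => (1, 1)%Z
  | true, true, false, false | false, false, true, true => (1, 0)%Z
  | true, false, true, false | false, true, false, true => (0, 1)%Z
  | _, _, _, _ => (0, 0)%Z
  end.
Definition delta1 (g : mat) : Z := fst (delta12 g).
Definition delta2 (g : mat) : Z := snd (delta12 g).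

Definition cis (theta : R) : C := (cos theta, sin theta).
Definition e (t : R) : C := cis (2 * PI * t).
(* lambda(z) = |z / sigma z|^(pi i / (4 log eps)) *)
Definition lam (z : R) : C :=
  cis (PI / (4 * ln eps) * ln (Rabs (z / sigma z))).

(* Main.v *)
Require Import Defs.
From Stdlib Require Import Reals ZArith QArith Qreals Lia Lra Psatz.
From Coquelicot Require Import Coquelicot.
Open Scope R_scope.

Lemma descent : forall k : nat, forall n d : Z, (Z.abs_nat d < k)%nat -> d <> 0%Z ->
  (n * n = 2 * (d * d))%Z -> False.
Proof.
  induction k as [|k IH]; intros n d Hk Hd H; [lia|].
  assert (Hn : Z.even n = true).
  { assert (Z.even (n*n) = true) by (rewrite H, Z.even_mul; reflexivity).
    rewrite Z.even_mul in H0. destruct (Z.even n); auto. }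
  apply Z.even_spec in Hn. destruct Hn as [m Hm]. subst n.
  assert (Hd2 : (d * d = 2 * (m * m))%Z) by lia.
  assert (He : Z.even d = true).
  { assert (Z.even (d*d) = true) by (rewrite Hd2, Z.even_mul; reflexivity).
    rewrite Z.even_mul in H0. destruct (Z.even d); auto. }
  apply Z.even_spec in He. destruct He as [k' Hk']. subst d.
  apply (IH m k'); lia.
Qed.

Lemma Q_not_sqrt2 : forall r : Q, Q2R r * Q2R r <> 2.
Proof.
  intros r H. rewrite <- Q2R_mult in H.
  assert (H2 : Q2R (r * r) = Q2R (2 # 1)) by (rewrite H; unfold Q2R; simpl; field).
  apply eqR_Qeq in H2. destruct r as [n d]. unfold Qeq, Qmult in H2. simpl in H2.
  apply (descent (S (Z.abs_nat (Z.pos d))) n (Z.pos d)); lia.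
Qed.

Lemma sqrt2_irr : forall p q p' q' : Q,
  Q2R p + Q2R q * sqrt 2 = Q2R p' + Q2R q' * sqrt 2 -> Q2R p = Q2R p' /\ Q2R q = Q2R q'.
Proof.
  intros p q p' q' H.
  destruct (Req_dec (Q2R q) (Q2R q')) as [Hq|Hq].
  - split; [|exact Hq]. rewrite Hq in H. lra.
  - exfalso. apply (Q_not_sqrt2 ((p' - p) / (q - q'))).
    assert (Hnz : ~ (q - q') == 0).
    { intro Hc. apply Hq. apply Qeq_eqR in Hc.
      rewrite Q2R_minus in Hc. assert (Q2R 0 = 0) by (unfold Q2R; simpl; field). lra. }
    rewrite Q2R_div by exact Hnz. rewrite !Q2R_minus.
    assert (E : sqrt 2 = (Q2R p' - Q2R p) / (Q2R q - Q2R q')).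
    { assert (Hd : Q2R q - Q2R q' <> 0) by lra.
      apply (Rmult_eq_reg_l (Q2R q - Q2R q')); [|exact Hd].
      unfold Rdiv. rewrite (Rmult_comm (Q2R p' - Q2R p)), <- Rmult_assoc, Rinv_r, Rmult_1_l by exact Hd. lra. }
    rewrite <- E. apply sqrt_sqrt. lra.
Qed.

Lemma IZR_Q2R : forall x : Z, IZR x = Q2R (inject_Z x).
Proof. intros. unfold Q2R, inject_Z. simpl. field. Qed.

Lemma sqrt2_irrZ : forall x y x' y' : Z,
  IZR x + IZR y * sqrt 2 = IZR x' + IZR y' * sqrt 2 -> IZR x = IZR x' /\ IZR y = IZR y'.
Proof. intros x y x1 y1 H. rewrite (IZR_Q2R x), (IZR_Q2R y), (IZR_Q2R x1), (IZR_Q2R y1) in *. apply sqrt2_irr. exact H. Qed.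

Lemma sigma_Z : forall x y : Z, Defs.sigma (IZR x + IZR y * sqrt 2) = IZR x - IZR y * sqrt 2.
Proof.
  intros x y. unfold Defs.sigma.
  destruct (ClassicalEpsilon.excluded_middle_informative _) as [H|H].
  - destruct (ClassicalEpsilon.constructive_indefinite_description _ H) as [[p q] Hpq]. simpl.
    rewrite (IZR_Q2R x), (IZR_Q2R y) in *. apply sqrt2_irr in Hpq. destruct Hpq as [E1 E2].
    simpl in *. rewrite <- E1, <- E2. reflexivity.
  - exfalso. apply H. exists (inject_Z x, inject_Z y). simpl. rewrite (IZR_Q2R x), (IZR_Q2R y). reflexivity.
Qed.
Lemma sqrt5_pos : 0 < sqrt 5.
Proof. apply sqrt_lt_R0. lra. Qed.

Lemma gamma_facts : forall g, inGamma g ->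
  exists n : Z,
  Defs.sigma (z1 g) = md g /\ Defs.sigma (z2 g) = mc g / sqrt 5 /\
  mb g * mc g = 5 * IZR n /\ Nm (z2 g) = IZR n /\ Nm (z1 g) = ma g * md g /\
  ma g * md g = 1 + mb g * mc g.
Proof.
  intros g [Hdet [x0 [x1 [x2 [x3 [Ha [Hb [Hc Hd]]]]]]]].
  pose proof sqrt5_pos as H5.
  assert (Ez2 : z2 g = IZR x2 + IZR x3 * sqrt 2).
  { unfold z2. rewrite Hb. field. lra. }
  assert (S1 : Defs.sigma (z1 g) = md g) by (unfold z1; rewrite Ha, Hd; apply sigma_Z).
  assert (S2 : Defs.sigma (z2 g) = mc g / sqrt 5).
  { rewrite Ez2, sigma_Z, Hc. field. lra. }
  assert (Q2 : sqrt 2 * sqrt 2 = 2) by (apply sqrt_sqrt; lra).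
  assert (Q5 : sqrt 5 * sqrt 5 = 5) by (apply sqrt_sqrt; lra).
  exists (x2 * x2 - 2 * x3 * x3)%Z.
  assert (En : IZR (x2 * x2 - 2 * x3 * x3) = IZR x2 * IZR x2 - 2 * (IZR x3 * IZR x3)).
  { rewrite minus_IZR, !mult_IZR. ring. }
  unfold det in Hdet.
  split; [exact S1|]. split; [exact S2|].
  split. { rewrite Hb, Hc, En.
           transitivity ((sqrt 5 * sqrt 5) * (IZR x2 * IZR x2 - (sqrt 2 * sqrt 2) * (IZR x3 * IZR x3))); [ring|].
           rewrite Q5, Q2. ring. }
  split. { unfold Nm. rewrite S2, Ez2, Hc, En.
           transitivity ((sqrt 5 / sqrt 5) * (IZR x2 * IZR x2 - (sqrt 2 * sqrt 2) * (IZR x3 * IZR x3))); [field; lra|].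
           rewrite Q2. unfold Rdiv. rewrite Rinv_r by lra. ring. }
  split. { unfold Nm. rewrite S1. reflexivity. }
  lra.
Qed.
Lemma part1 : forall g g' : mat, inGamma g -> inGamma g' ->
     z1 g = z1 g' -> z2 g = z2 g' -> g = g'.
Proof.
  intros g g' [_ [x0 [x1 [x2 [x3 [Ha [Hb [Hc Hd]]]]]]]]
              [_ [y0 [y1 [y2 [y3 [Ha' [Hb' [Hc' Hd']]]]]]]] E1 E2.
  pose proof sqrt5_pos as H5.
  unfold z1, z2 in *.
  assert (Eb : mb g = mb g').
  { apply (Rmult_eq_reg_r (/ sqrt 5)); [exact E2|]. apply Rinv_neq_0_compat; lra. }
  rewrite Ha, Ha' in E1. apply sqrt2_irrZ in E1. destruct E1 as [e0 e1].
  rewrite Hb, Hb' in Eb. apply Rmult_eq_reg_l in Eb; [|lra].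
  apply sqrt2_irrZ in Eb. destruct Eb as [e2 e3].
  destruct g, g'; simpl in *. subst. f_equal; congruence.
Qed.

Lemma part3_pow : forall p q n, mpow (Mat p 0 0 q) n = Mat (p ^ n) 0 0 (q ^ n).
Proof.
  intros p q n. induction n as [|n IH]; simpl.
  - reflexivity.
  - rewrite IH. unfold mmul; simpl. f_equal; ring.
Qed.

Lemma eps_pos : 1 < eps.
Proof. unfold eps. pose proof (sqrt_lt_R0 2 ltac:(lra)). lra. Qed.

Lemma h0_pow : forall j, mpowZ h0 j = Mat (powerRZ eps (2 * j)) 0 0 (powerRZ eps (- (2 * j))).
Proof.
  pose proof eps_pos as He.
  intros [|p|p]; simpl.
  - reflexivity.
  - unfold h0. rewrite part3_pow. rewrite Pos2Nat.inj_xO, pow_mult, pow_inv. reflexivity.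
  - unfold minv, h0; simpl. rewrite Ropp_0, part3_pow.
    rewrite Pos2Nat.inj_xO, pow_mult, pow_inv. reflexivity.
Qed.

Lemma part3 : forall (g : mat) (j1 j2 : Z), inGamma g ->
     z1 (mmul (mpowZ h0 j1) (mmul g (mpowZ h0 j2))) = powerRZ eps (2 * (j1 + j2)) * z1 g /\
     z2 (mmul (mpowZ h0 j1) (mmul g (mpowZ h0 j2))) = powerRZ eps (2 * (j1 - j2)) * z2 g.
Proof.
  intros g j1 j2 _. pose proof eps_pos as He.
  rewrite !h0_pow. unfold z1, z2, mmul; cbn [ma mb mc md].
  rewrite Z.mul_add_distr_l, Z.mul_sub_distr_l, <- Z.add_opp_r, !powerRZ_add by lra.
  split; unfold Rdiv; ring.
Qed.
Lemma posb_cases x : x <> 0 -> (x < 0 /\ posb x = false) \/ (0 < x /\ posb x = true).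
Proof.
  intros H. unfold posb. destruct (Rlt_dec 0 x) as [h|h].
  - right; auto.
  - left; split; auto. destruct (Rdichotomy _ _ H); lra.
Qed.

Lemma notS g : ~ in_S g -> ma g <> 0 /\ mb g <> 0 /\ mc g <> 0 /\ md g <> 0.
Proof.
  intros HS.
  assert (Hs : ma g * mb g * mc g * md g <> 0) by (intro H; apply HS; left; exact H).
  repeat split; intro E; apply Hs; rewrite E; ring.
Qed.

Ltac sgncase H x Hx :=
  let p := fresh "p" in let E := fresh "E" in
  destruct (posb_cases x Hx) as [[p E]|[p E]]; rewrite E in H.

Lemma part2 : forall g : mat, inGamma g -> ~ in_S g ->
     Nm (z1 g) <> 0 /\ Nm (z2 g) <> 0 /\ 0 < Nm (z1 g) * Nm (z2 g) /\
     Nm (z1 g) = 5 * Nm (z2 g) + 1 /\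
     exists n : Z, Nm (z2 g) = IZR n /\
       (Z.even (delta1 g + delta2 g) = true ->
          (0 <= n)%Z /\ delta g = 20 * IZR n + 2) /\
       (Z.odd (delta1 g + delta2 g) = true ->
          (n <= 0)%Z /\ delta g = - 20 * IZR n - 2).
Proof.
  intros g Hg HS.
  destruct (gamma_facts g Hg) as [n [S1 [S2 [Hbc [N2 [N1 Hdet]]]]]].
  destruct (notS g HS) as [Ha [Hb [Hc Hd]]].
  assert (Hn : (n >= 1 \/ n <= -1)%Z).
  { destruct (Z.eq_dec n 0) as [E|E]; [|lia]. subst n. exfalso.
    apply (Rmult_integral_contrapositive_currified _ _ Hb Hc). rewrite Hbc. ring. }
  assert (Hdl : delta g = 2 * Rabs (1 + 10 * IZR n)) by (unfold delta; do 2 f_equal; lra).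
  rewrite N1, N2.
  split. { apply Rmult_integral_contrapositive_currified; assumption. }
  split. { intro E. apply (Rmult_integral_contrapositive_currified _ _ Hb Hc). rewrite Hbc, E. ring. }
  destruct Hn as [Hn|Hn].
  - assert (Rn : 1 <= IZR n) by (apply IZR_le; lia).
    split. { nra. } split. { lra. }
    exists n. split; [reflexivity|]. split.
    + intros _. split; [lia|]. rewrite Hdl, Rabs_right by lra. ring.
    + intros Hodd. exfalso. unfold delta1, delta2, delta12 in Hodd.
      sgncase Hodd (ma g) Ha; sgncase Hodd (mb g) Hb; sgncase Hodd (mc g) Hc;
      sgncase Hodd (md g) Hd; simpl in Hodd; try discriminate; nra.
  - assert (Rn : IZR n <= -1) by (apply IZR_le; lia).
    split. { nra. } split. { lra. }
    exists n. split; [reflexivity|]. split.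
    + intros Hev. exfalso. unfold delta1, delta2, delta12 in Hev.
      sgncase Hev (ma g) Ha; sgncase Hev (mb g) Hb; sgncase Hev (mc g) Hc;
      sgncase Hev (md g) Hd; simpl in Hev; try discriminate; nra.
    + intros _. split; [lia|]. rewrite Hdl, Rabs_left by lra. ring.
Qed.
Lemma ln_sqrt' x : 0 < x -> ln (sqrt x) = ln x / 2.
Proof.
  intros H. pose proof (sqrt_lt_R0 x H).
  rewrite <- (sqrt_sqrt x) at 2 by lra. rewrite ln_mult by lra. field.
Qed.

Lemma cis_mult A B : Cmult (cis A) (cis B) = cis (A + B).
Proof. unfold Cmult, cis; simpl. rewrite cos_plus, sin_plus. f_equal; ring. Qed.

Lemma cis_div A B : Cdiv (cis A) (cis B) = cis (A - B).
Proof.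
  unfold Cdiv, Cmult, Cinv, cis; simpl.
  assert (H : cos B * (cos B * 1) + sin B * (sin B * 1) = 1).
  { pose proof (sin2_cos2 B). unfold Rsqr in H. lra. }
  rewrite H, cos_minus, sin_minus. f_equal; field.
Qed.

Lemma part4 : forall g : mat, inGamma g -> ~ in_S g ->
     e (ln (y1 g) / ln (eps ^ 4)) = Cmult (lam (z1 g)) (lam (z2 g)) /\
     e (ln (y2 g) / ln (eps ^ 4)) = Cdiv (lam (z1 g)) (lam (z2 g)).
Proof.
  intros g Hg HS.
  destruct (gamma_facts g Hg) as [n [S1 [S2 [Hbc [N2 [N1 Hdet]]]]]].
  destruct (notS g HS) as [Ha [Hb [Hc Hd]]].
  pose proof sqrt5_pos as H5. pose proof eps_pos as He.
  assert (Hle : 0 < ln eps) by (rewrite <- ln_1; apply ln_increasing; lra).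
  assert (L4 : ln (eps ^ 4) = 4 * ln eps) by (rewrite ln_pow by lra; simpl; ring).
  assert (Hu : 0 < Rabs (ma g / md g)) by (apply Rabs_pos_lt; unfold Rdiv; apply Rmult_integral_contrapositive_currified; [|apply Rinv_neq_0_compat]; assumption).
  assert (Hv : 0 < Rabs (mb g / mc g)) by (apply Rabs_pos_lt; unfold Rdiv; apply Rmult_integral_contrapositive_currified; [|apply Rinv_neq_0_compat]; assumption).
  assert (Hbc0 : mb g / mc g <> 0) by (unfold Rdiv; apply Rmult_integral_contrapositive_currified; [|apply Rinv_neq_0_compat]; assumption).
  assert (E1 : lam (z1 g) = cis (PI / (4 * ln eps) * ln (Rabs (ma g / md g)))).
  { unfold lam. rewrite S1. reflexivity. }
  assert (E2 : lam (z2 g) = cis (PI / (4 * ln eps) * ln (Rabs (mb g / mc g)))).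
  { unfold lam. rewrite S2. unfold z2. do 4 f_equal. field. split; lra. }
  assert (Y1 : Rabs (ma g * mb g / (mc g * md g)) = Rabs (ma g / md g) * Rabs (mb g / mc g)).
  { rewrite <- Rabs_mult. f_equal. field. split; assumption. }
  assert (Y2 : Rabs (ma g * mc g / (mb g * md g)) = Rabs (ma g / md g) / Rabs (mb g / mc g)).
  { rewrite <- Rabs_div by exact Hbc0. f_equal. field. repeat split; assumption. }
  rewrite E1, E2, cis_mult, cis_div. unfold e, y1, y2. rewrite Y1, Y2, L4.
  rewrite !ln_sqrt'. 2: { apply Rdiv_lt_0_compat; assumption. }
  2: { apply Rmult_lt_0_compat; assumption. }
  rewrite ln_mult, ln_div by assumption.
  split; f_equal; field; lra.
Qed.

Theorem proposition4p10 :
  (* (1) injectivity of gamma |-> (z1 gamma, z2 gamma) on Gamma *)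
  (forall g g' : mat, inGamma g -> inGamma g' ->
     z1 g = z1 g' -> z2 g = z2 g' -> g = g') /\
  (* (2) *)
  (forall g : mat, inGamma g -> ~ in_S g ->
     Nm (z1 g) <> 0 /\ Nm (z2 g) <> 0 /\ 0 < Nm (z1 g) * Nm (z2 g) /\
     Nm (z1 g) = 5 * Nm (z2 g) + 1 /\
     exists n : Z, Nm (z2 g) = IZR n /\
       (Z.even (delta1 g + delta2 g) = true ->
          (0 <= n)%Z /\ delta g = 20 * IZR n + 2) /\
       (Z.odd (delta1 g + delta2 g) = true ->
          (n <= 0)%Z /\ delta g = - 20 * IZR n - 2)) /\
  (* (3) *)
  (forall (g : mat) (j1 j2 : Z), inGamma g ->
     z1 (mmul (mpowZ h0 j1) (mmul g (mpowZ h0 j2))) = powerRZ eps (2 * (j1 + j2)) * z1 g /\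
     z2 (mmul (mpowZ h0 j1) (mmul g (mpowZ h0 j2))) = powerRZ eps (2 * (j1 - j2)) * z2 g) /\
  (* (4) *)
  (forall g : mat, inGamma g -> ~ in_S g ->
     e (ln (y1 g) / ln (eps ^ 4)) = Cmult (lam (z1 g)) (lam (z2 g)) /\
     e (ln (y2 g) / ln (eps ^ 4)) = Cdiv (lam (z1 g)) (lam (z2 g))).
Proof.
  split; [exact part1|]. split; [exact part2|]. split; [exact part3|]. exact part4.
Qed.
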